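(* Let $G$ be a group and let $A,B,C$ be nonempty finite subsets of $G$ with $B\subset C$ and $1\in C$. Then either $ABC=AB$ or $|ABC|\geq |A|+|B|$.
   Context: For subsets $X,Y,Z$ of a multiplicative group $G$, $XY=\{xy\mid x\in X,\ y\in Y\}$ and $XYZ=\{xyz\mid x\in X,\ y\in Y,\ z\in Z\}$. *)

(* Defs.v *)
From Stdlib Require Export Ensembles Finite_sets.

Record Group := {
  carrier :> Type;
  gmul : carrier -> carrier -> carrier;
  gone : carrier;
  ginv : carrier -> carrier;
  gmul_assoc : forall x y z, gmul x (gmul y z) = gmul (gmul x y) z;
  gmul_1l : forall x, gmul gone x = x;
  gmul_Vl : forall x, gmul (ginv x) x = gone
}.

Definition setmul {G : Group} (X Y : Ensemble G) : Ensemble G :=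
  fun z => exists x y, In G X x /\ In G Y y /\ z = gmul G x y.

Definition setmul3 {G : Group} (X Y Z : Ensemble G) : Ensemble G :=
  fun w => exists x y z, In G X x /\ In G Y y /\ In G Z z /\
                         w = gmul G (gmul G x y) z.

Definition nonempty {G : Group} (X : Ensemble G) : Prop := exists x, In G X x.

(* Main.v *)
Require Import Defs.
From HB Require Import structures.
From Stdlib Require Import ClassicalDescription Classical FunctionalExtensionality PropExtensionality Lia.
From mathcomp Require all_boot.

Module Aux.
Import mathcomp.boot.all_boot.
Import Defs.
Set Implicit Arguments. Unset Strict Implicit.


Lemma nu_lt N a b a' b' : a <= N -> b <= N -> a' <= N -> b' <= N ->
  (a + b < a' + b') || ((a + b <= a' + b') && (a < a')) ->
  (2*N - (a'+b'))*(N.+1) + (N - a') < (2*N - (a+b))*(N.+1) + (N - a).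
Proof.
move=> /leP h1 /leP h2 /leP h3 /leP h4 /orP [/leP h|/andP [/leP h /leP h']].
- have : (2*N - (a'+b') + 1) * N.+1 <= (2*N - (a+b)) * N.+1.
    apply: leq_mul => //. apply/leP.
    rewrite -?plusE -?minusE -?multE in h1 h2 h3 h4 h *; lia.
  rewrite mulnDl mul1n.
  set X := _ * N.+1; set Y := _ * N.+1.
  move/leP=> K; apply/leP.
  rewrite -?plusE -?minusE -?multE in h1 h2 h3 h4 h K *; lia.
- have : (2*N - (a'+b')) * N.+1 <= (2*N - (a+b)) * N.+1.
    apply: leq_mul => //. apply/leP.
    rewrite -?plusE -?minusE -?multE in h1 h2 h3 h4 h *; lia.
  set X := _ * N.+1; set Y := _ * N.+1.
  move/leP=> K; apply/leP.
  rewrite -?plusE -?minusE -?multE in h1 h2 h3 h4 h h' K *; lia.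
Qed.

Lemma ar1 a b' al be : be <= al -> 0 < al ->
  (a + (b' + be) < (a + al) + b') || ((a + (b' + be) <= (a + al) + b') && (a < a + al)).
Proof. move=> /leP h /leP h'; apply/orP; right; apply/andP; split; apply/leP; rewrite -?plusE in h h' *; lia. Qed.
Lemma ar2 a' b al be : al < be ->
  ((a' + al) + b < a' + (b + be)) || (((a' + al) + b <= a' + (b + be)) && (a' + al < a')).
Proof. move=> /leP h; apply/orP; left; apply/leP; rewrite -?plusE in h *; lia. Qed.

Section Grp.
Variable G : Group.
Definition gdec : comparable G := fun x y => excluded_middle_informative (x = y).
HB.instance Definition _ := comparableMixin gdec.

Local Notation "x ** y" := (gmul G x y) (at level 40, left associativity).
Local Notation one := (gone G).
Local Notation inv := (ginv G).

Lemma mulA x y z : x ** (y ** z) = x ** y ** z. Proof. exact: gmul_assoc. Qed.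
Lemma mul1 x : one ** x = x. Proof. exact: gmul_1l. Qed.
Lemma mulV x : inv x ** x = one. Proof. exact: gmul_Vl. Qed.
Lemma mulKl x y : inv x ** (x ** y) = y. Proof. by rewrite mulA mulV mul1. Qed.
Lemma mulVr x : x ** inv x = one.
Proof.
set e := x ** inv x.
have ee : e ** e = e by rewrite /e -mulA mulKl.
by rewrite -(mulKl e e) ee mulV.
Qed.
Lemma mul1r x : x ** one = x. Proof. by rewrite -(mulV x) mulA mulVr mul1. Qed.
Lemma mulKr x y : y ** x ** inv x = y. Proof. by rewrite -mulA mulVr mul1r. Qed.
Lemma mulVKr x y : y ** inv x ** x = y. Proof. by rewrite -mulA mulV mul1r. Qed.
Lemma mulKVl x y : x ** (inv x ** y) = y. Proof. by rewrite mulA mulVr mul1. Qed.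
Lemma mul_eq1 x y : x ** y = one -> x = inv y.
Proof. by move=> h; rewrite -(mulKr y x) h mul1. Qed.

Lemma count_split (s : seq G) (p q : pred G) :
  count p s = count (fun z => p z && q z) s + count (fun z => p z && ~~ q z) s.
Proof.
elim: s => //= x s ->; case: (p x); case: (q x) => /=; rewrite ?add0n ?add1n ?addSn ?addnS //.
Qed.

Lemma count_or (s : seq G) (p q : pred G) :
  count (fun z => p z || q z) s = count p s + count (fun z => q z && ~~ p z) s.
Proof.
elim: s => //= x s ->; case: (p x); case: (q x) => /=; rewrite ?add0n ?add1n ?addSn ?addnS //.
Qed.


Lemma count_eq_size (V l : seq G) (p : pred G) (f : G -> G) :
  uniq V -> uniq l -> injective f -> (forall z, p z -> z \in V) ->
  (forall x, x \in l -> p (f x)) -> (forall z, p z -> exists2 x, x \in l & z = f x) ->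
  count p V = size l.
Proof.
move=> Vu lu fi pV h1 h2; rewrite -size_filter -[size l](size_map f).
apply: perm_size; apply: uniq_perm; first exact: filter_uniq.
  by rewrite map_inj_uniq.
move=> z; rewrite mem_filter; apply/andP/mapP => [[pz _]|[x xl ->]].
  by case: (h2 z pz) => x xl ->; exists x.
by have pz := h1 x xl; split => //; apply: pV.
Qed.

Lemma fin_list (X : Ensemble G) : Finite G X ->
  exists l : seq G, uniq l /\ forall x, In G X x <-> x \in l.
Proof.
elim => [|Y _ [l [lu hl]] x nx].
  by exists [::]; split => // x; split => [[]|].
exists (x :: l); split.
  by rewrite /= lu andbT; apply/negP => /hl.
move=> z; split.
  case => [z' /hl zl|z' []]; rewrite in_cons ?eqxx //.
  by rewrite zl orbT.
rewrite in_cons => /orP [/eqP ->|/hl zl]; [right|left] => //.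
Qed.

Lemma list_card (l : seq G) : uniq l -> forall X : Ensemble G,
  (forall x, In G X x <-> x \in l) -> cardinal G X (size l).
Proof.
elim: l => [|x l IH] lu X hX.
  have -> : X = Empty_set G.
    apply: functional_extensionality => z; apply: propositional_extensionality.
    by split => [/hX|[]].
  exact: card_empty.
move: lu => /= /andP [xl lu].
have -> : X = Add G (fun z => z \in l) x.
  apply: functional_extensionality => z; apply: propositional_extensionality.
  split => [/hX|].
    by rewrite in_cons => /orP [/eqP ->|zl]; [right|left].
  by case => [z' zl|z' []]; apply/hX; rewrite in_cons ?eqxx // zl orbT.
apply: card_add; first exact: IH.
by move=> /= xl'; rewrite /In xl' in xl.
Qed.

Variable U : seq G.
Hypothesis Uu : uniq U.

Lemma count_inj (p q : pred G) f : injective f ->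
  (forall z, p z -> q (f z) /\ f z \in U) -> count p U <= count q U.
Proof.
move=> fi H; rewrite -!size_filter -(size_map f); apply: uniq_leq_size.
  by rewrite map_inj_uniq // filter_uniq.
move=> w /mapP [z]; rewrite mem_filter => /andP [pz zU] ->.
by rewrite mem_filter; case: (H z pz) => -> ->.
Qed.

Definition prodp (A B : pred G) : pred G :=
  fun z => has (fun x => has (fun y => [&& A x, B y & z == x ** y]) U) U.

Lemma prodP (A B : pred G) z : reflect (exists x y, [/\ x \in U, y \in U, A x, B y & z = x ** y])
  (prodp A B z).
Proof.
apply: (iffP hasP) => [[x xU /hasP [y yU /and3P [ax bY /eqP ->]]]| [x [y [xU yU ax bY ->]]]].
  by exists x, y.
by exists x => //; apply/hasP; exists y => //; apply/and3P.
Qed.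

Lemma rinj g : injective (fun z => z ** g).
Proof. by move=> x y h; rewrite -(mulKr g x) h mulKr. Qed.
Lemma linj g : injective (fun z => g ** z).
Proof. by move=> x y h; rewrite -(mulKl g x) h mulKl. Qed.


Definition nu (A B : pred G) :=
  (2*size U - (count A U + count B U))*(size U).+1 + (size U - count A U).

Definition scherk_hyp (A B : pred G) :=
  [/\ (forall x, A x -> x \in U), (forall x, B x -> x \in U),
      (forall x y, A x -> B y -> x ** y \in U), A one && B one &
      (forall x y, A x -> B y -> x ** y = one -> x = one)].

Lemma transl_count (A : pred G) g :
  (forall x, A x -> x \in U) -> (forall x, A x -> x ** g \in U) ->
  count (fun z => A (z ** inv g)) U = count A U.
Proof.
move=> AU AgU; apply/eqP; rewrite eqn_leq; apply/andP; split.
  apply: (count_inj (f := fun z => z ** inv g)) => [|z az]; first exact: rinj.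
  by split => //; apply: AU.
apply: (count_inj (f := fun z => z ** g)) => [|z az]; first exact: rinj.
by rewrite mulKr; split => //; apply: AgU.
Qed.

Lemma ltransl_count (B : pred G) g :
  (forall x, B x -> x \in U) -> (forall x, B x -> g ** x \in U) ->
  count (fun z => B (inv g ** z)) U = count B U.
Proof.
move=> BU BgU; apply/eqP; rewrite eqn_leq; apply/andP; split.
  apply: (count_inj (f := fun z => inv g ** z)) => [|z az]; first exact: linj.
  by split => //; apply: BU.
apply: (count_inj (f := fun z => g ** z)) => [|z az]; first exact: linj.
by rewrite mulKl; split => //; apply: BgU.
Qed.

Lemma scherk_gen n : forall A B : pred G, nu A B = n -> scherk_hyp A B ->
  count A U + count B U <= count (prodp A B) U + 1.
Proof.
elim/ltn_ind: n => n IH A B nuE [AU BU ABU /andP [A1 B1] uniqAB].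
have oneU : one \in U by apply: AU.
case: (boolP (has (fun g => [&& A g, B g & g != one]) U)) =>
  [/hasP [g gU /and3P [Ag Bg g1]] | nog].

  set alpha := count (fun z => A (z ** inv g) && ~~ A z) U.
  set beta := count (fun z => B (inv g ** z) && ~~ B z) U.
  have AgU : forall x, A x -> x ** g \in U by move=> x ax; apply: ABU.
  have gBU : forall x, B x -> g ** x \in U by move=> x bx; apply: ABU.
  have tA := transl_count AU AgU.
  case: (leqP beta alpha) => hab.
  - pose A' := fun z => A z || A (z ** inv g).
    pose B' := fun z => B z && B (g ** z).
    have cA' : count A' U = count A U + alpha by rewrite /A' count_or.
    have cB' : count B' U + beta = count B U.
      rewrite [RHS](count_split U B (fun z => B (g ** z))); congr (_ + _).
      apply/eqP; rewrite eqn_leq; apply/andP; split.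
        apply: (count_inj (f := fun z => inv g ** z)); first exact: linj.
        move=> z /andP [bz nbz] /=; rewrite mulKVl bz nbz; split => //; by apply: BU.
      apply: (count_inj (f := fun z => g ** z)); first exact: linj.
      move=> z /andP [bz nbz] /=; rewrite mulKl bz nbz; split => //; by apply: gBU.
    have apos : 0 < alpha.
      have e1 := count_split U A (fun z => A (z ** inv g)).
      have e2 := count_split U (fun z => A (z ** inv g)) A.
      have e3 : count (fun z => A z && A (z ** inv g)) U =
                count (fun z => A (z ** inv g) && A z) U.
        by apply: eq_count => z; rewrite andbC.
      have : 0 < count (fun z => A z && ~~ A (z ** inv g)) U.
        rewrite -has_count; apply/hasP; exists one => //; rewrite A1 /=; apply/negP => ag.
        rewrite mul1 in ag.
        have ig := uniqAB _ _ ag Bg (mulV g).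
        have := mulV g; rewrite ig mul1 => ge.
        by rewrite ge eqxx in g1.
      move: e1; rewrite e3 -tA e2 => /eqP; rewrite eqn_add2l => /eqP <-.
      by [].
    have hyp' : scherk_hyp A' B'.
      split.
      - move=> x /orP [ax|ax]; first exact: AU.
        by rewrite -(mulVKr g x); apply: ABU.
      - by move=> x /andP [bx _]; apply: BU.
      - move=> x y /orP [ax|ax] /andP [bx bgx]; first exact: ABU.
        have -> : x ** y = x ** inv g ** (g ** y) by rewrite mulA mulVKr.
        exact: ABU.
      - by rewrite /A' /B' A1 /= B1 mul1r Bg.
      - move=> x y /orP [ax|ax] /andP [bx bgx] xy; first exact: uniqAB _ _ ax bx xy.
        have xg : x ** inv g = one.
          by apply: (uniqAB _ _ ax bgx); rewrite mulA mulVKr.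
        have xeq : x = g by rewrite -(mulVKr g x) xg mul1.
        by apply: (uniqAB _ y) => //; rewrite xeq.
    have nu' : nu A' B' < n.
      rewrite -nuE /nu; apply: nu_lt; rewrite ?count_size //.
      by rewrite cA' -cB'; apply: ar1.
    have := IH _ nu' A' B' erefl hyp'.
    have sp : count (prodp A' B') U <= count (prodp A B) U.
      apply: sub_count => z /prodP [x [y [xU yU /orP [ax|ax] /andP [bx bgx] ->]]];
        apply/prodP; first by exists x, y.
      exists (x ** inv g), (g ** y); split => //; [exact: AU | exact: BU | by rewrite mulA mulVKr].
    move=> h.
    have s1 : count A U + count B U <= count A' U + count B' U.
      by move: hab; rewrite cA' -cB' => /leP ?; apply/leP; rewrite -?plusE; lia.
    by rewrite (leq_trans s1) // (leq_trans h) // leq_add2r.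
  - pose A' := fun z => A z && A (z ** g).
    pose B' := fun z => B z || B (inv g ** z).
    have cB' : count B' U = count B U + beta by rewrite /B' count_or.
    have cA' : count A' U + alpha = count A U.
      rewrite [RHS](count_split U A (fun z => A (z ** g))); congr (_ + _).
      apply/eqP; rewrite eqn_leq; apply/andP; split.
        apply: (count_inj (f := fun z => z ** inv g)); first exact: rinj.
        move=> z /andP [az naz] /=; rewrite mulVKr az naz; split => //; by apply: AU.
      apply: (count_inj (f := fun z => z ** g)); first exact: rinj.
      move=> z /andP [az naz] /=; rewrite mulKr az naz; split => //; by apply: AgU.
    have hyp' : scherk_hyp A' B'.
      split.
      - by move=> x /andP [ax _]; apply: AU.
      - move=> x /orP [bx|bx]; first exact: BU.
        by rewrite -(mulKVl g x); apply: ABU.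
      - move=> x y /andP [ax axg] /orP [bx|bx]; first exact: ABU.
        have -> : x ** y = x ** g ** (inv g ** y) by rewrite mulA mulKr.
        exact: ABU.
      - by rewrite /A' /B' A1 /= B1 mul1 Ag.
      - move=> x y /andP [ax axg] /orP [bx|bx] xy; first exact: uniqAB _ _ ax bx xy.
        have xg : x ** g = one.
          by apply: (uniqAB _ _ axg bx); rewrite mulA mulKr.
        have xeq : x = inv g by apply: mul_eq1.
        rewrite xeq in ax *.
        exact: (uniqAB _ _ ax Bg (mulV g)).
    have nu' : nu A' B' < n.
      rewrite -nuE /nu; apply: nu_lt; rewrite ?count_size //.
      by rewrite cB' -cA'; apply: ar2.
    have := IH _ nu' A' B' erefl hyp'.
    have sp : count (prodp A' B') U <= count (prodp A B) U.
      apply: sub_count => z /prodP [x [y [xU yU /andP [ax axg] /orP [bx|bx] ->]]];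
        apply/prodP; first by exists x, y.
      exists (x ** g), (inv g ** y); split => //; [exact: AgU | exact: BU | by rewrite mulA mulKr].
    move=> h.
    have s1 : count A U + count B U <= count A' U + count B' U.
      by move: hab; rewrite -cA' cB' => /leP ?; apply/leP; rewrite -?plusE; lia.
    by rewrite (leq_trans s1) // (leq_trans h) // leq_add2r.
rewrite -count_predUI; apply: leq_add.
  apply: sub_count => z /orP [az|bz]; apply/prodP.
    by exists z, one; rewrite mul1r; split => //; apply: AU.
  by exists one, z; rewrite mul1; split => //; apply: BU.
apply: (leq_trans (n := count (pred1 one) U)).
  apply: sub_count => z /andP [az bz] /=; apply/negPn/negP => zn.
  by move/hasP: nog; apply; exists z; [apply: AU | apply/and3P].
by rewrite count_uniq_mem // leq_b1.
Qed.

End Grp.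

Section Main.
Variable G : Group.
Local Notation "x ** y" := (gmul G x y) (at level 40, left associativity).
Local Notation one := (gone G).
Local Notation inv := (ginv G).

Lemma main_aux (A B C : Ensemble G)
  (hAf : Finite G A) (hBf : Finite G B) (hCf : Finite G C)
  (hBC : Included G B C) (h1C : In G C (gone G)) :
  Same_set G (setmul3 A B C) (setmul A B) \/
  (exists n a b : nat, cardinal G (setmul3 A B C) n /\ cardinal G A a /\
     cardinal G B b /\ le (Nat.add a b) n).
Proof.
have [lA [lAu hA]] := fin_list hAf.
have [lB [lBu hB]] := fin_list hBf.
have [lC [lCu hC]] := fin_list hCf.
set lAB := [seq x ** y | x <- lA, y <- lB].
set l3 := undup [seq p ** z | p <- lAB, z <- lC].
have h3 : forall w, In G (setmul3 A B C) w <-> w \in l3.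
  move=> w; rewrite mem_undup; split.
    rewrite /In /setmul3 => -[x [y [z [ax [bY [cz ->]]]]]].
    apply/allpairsP; exists (x ** y, z); split => //=; last by apply/hC.
    by apply/allpairsP; exists (x, y); split => //; [apply/hA|apply/hB].
  case/allpairsP => [[p z] [/= /allpairsP [[x y] [/= xa yb ->]] zc ->]].
  by exists x, y, z; split; [apply/hA|split; [apply/hB|split; [apply/hC|]]].
case: (classic (forall w, setmul3 A B C w -> setmul A B w)) => hsub.
  left; split => w hw; first exact: hsub.
  move: hw; rewrite /In /setmul => -[x [y [ax [bY ->]]]]; exists x, y, one; split; first exact: ax. split; first exact: bY. split; first exact: h1C. by rewrite mul1r.
right; exists (size l3), (size lA), (size lB).
split; first exact: (list_card (undup_uniq _) h3).
split; first exact: (list_card lAu hA).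
split; first exact: (list_card lBu hB).
have [w hw'] := not_all_ex_not _ _ hsub.
have [hw wnot] := imply_to_and _ _ hw'.
move: hw; rewrite /setmul3 => -[a [b [c [aA [bB [cC wE]]]]]].
set e := b ** c.
have we : w = a ** e by rewrite wE /e mulA.
have alg : forall z, inv a ** (a ** z ** e) ** inv e = z.
  by move=> z; rewrite -(mulA a z e) mulKl mulKr.
set U := undup (map (fun z => inv a ** z ** inv e) l3).
have key : forall z, a ** z ** e \in l3 -> z \in U.
  by move=> z h; rewrite mem_undup; apply/mapP; exists (a ** z ** e) => //; rewrite alg.
pose A1 : pred G := fun z => (a ** z) \in lA.
pose E1 : pred G := fun z => ((z ** e) \in lB) || (z == one).
have aAl : a \in lA by apply/hA.
have eB : e \notin lB.
  apply/negP => /hB eb; apply: wnot; exists a, e; split => //.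
have hyp : scherk_hyp U A1 E1.
  split.
  - move=> z az; apply: key; apply/h3; exists (a ** z), b, c; split; first by apply/hA.
    by split => //; split => //; rewrite /e mulA.
  - move=> z /orP [zb|/eqP ->].
      apply: key; apply/h3; exists a, (z ** e), one; split => //; split; first by apply/hB.
      by split => //; rewrite mul1r mulA.
    apply: key; rewrite mul1r -we; apply/h3; exists a, b, c.
    by split; first exact: aA; split; first exact: bB; split.
  - move=> x y ax /orP [yb|/eqP ->].
      apply: key; apply/h3; exists (a ** x), (y ** e), one; split; first by apply/hA.
      split; first by apply/hB. split; first exact: h1C. by rewrite mul1r !mulA.
    apply: key; apply/h3; exists (a ** x), b, c; split; first by apply/hA.
    split; first exact: bB. split; first exact: cC. by rewrite mul1r /e !mulA.
  - by rewrite /A1 /E1 mul1r aAl eqxx orbT.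
  - move=> x y ax /orP [yb|/eqP ->] xy; last by rewrite -xy mul1r.
    exfalso; apply: wnot; exists (a ** x), (y ** e); split; first by apply/hA.
    split; first by apply/hB.
    by rewrite we -mulA [x ** (y ** e)]mulA xy mul1.
have sc := @scherk_gen G U (undup_uniq _) _ A1 E1 erefl hyp.
case: hyp => AU EU _ _ _.
have cA1 : count A1 U = size lA.
  apply: (count_eq_size (f := fun x => inv a ** x)).
  - exact: undup_uniq.
  - exact: lAu.
  - exact: linj.
  - exact: AU.
  - by move=> x xl; rewrite /A1 mulKVl.
  - by move=> z az; exists (a ** z) => //; rewrite mulKl.
have cE1 : count E1 U = size (e :: lB).
  apply: (count_eq_size (f := fun x => x ** inv e)).
  - exact: undup_uniq.
  - by rewrite /= eB lBu.
  - exact: rinj.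
  - exact: EU.
  - move=> x; rewrite in_cons => /orP [/eqP ->|xl]; rewrite /E1 /=.
      by rewrite mulVr eqxx orbT.
    by rewrite mulVKr xl.
  - move=> z /orP [zb|/eqP ->].
      by exists (z ** e); [rewrite in_cons zb orbT|rewrite mulKr].
    by exists e; [rewrite in_cons eqxx|rewrite mulVr].
have h1 : count (prodp U A1 E1) U <= size l3.
  apply: leq_trans (count_size _ _) _; rewrite /U.
  by apply: leq_trans (size_undup _) _; rewrite size_map.
have : size lA + (size lB).+1 <= size l3 + 1.
  by rewrite -cA1 -[(size lB).+1]/(size (e :: lB)) -cE1; apply: leq_trans sc _; rewrite leq_add2r.
rewrite addnS addn1 ltnS => h; exact/leP.
Qed.
End Main.

End Aux.

Theorem mainTheorem1 (G : Group) (A B C : Ensemble G)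
  (hAf : Finite G A) (hBf : Finite G B) (hCf : Finite G C)
  (hAne : nonempty A) (hBne : nonempty B) (hCne : nonempty C)
  (hBC : Included G B C) (h1C : In G C (gone G)) :
  Same_set G (setmul3 A B C) (setmul A B) \/
  (exists n a b : nat, cardinal G (setmul3 A B C) n /\ cardinal G A a /\
     cardinal G B b /\ a + b <= n).
Proof.
  exact (Aux.main_aux hAf hBf hCf hBC h1C).
Qed.
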